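(* For every $n\ge1$, the Zimin word $Z_n$ is an involutory isoterm relative to $\mathcal{K}_3^\rho$. That is, if $w$ is an involutory word such that the identity $Z_n\approx w$ holds in $\mathcal{K}_3^\rho$, then $w=Z_n$.
   Context: $\mathcal{K}_3$ is the monoid presented by generators $c,h_1,h_2$ and relations $h_1h_2h_1=h_1$, $h_2h_1h_2=h_2$, and $h_i^2=ch_i=h_ic$ for $i=1,2$. $\mathcal{K}_3^\rho$ is $\mathcal{K}_3$ regarded as an involution semigroup under the rotation ${}^\rho$, which is the unique involutory anti-automorphism fixing $c$ and swapping $h_1\leftrightarrow h_2$. Zimin words are defined by $Z_1=x_1$ and $Z_{n+1}=Z_nx_{n+1}Z_n$. Involutory words over $X$ are elements of the free semigroup on $X\cup\{x^\star\mid x\in X\}$, with involution $(x_1\cdots x_m)^\star=x_m^\star\cdots x_1^\star$ and $(x^\star)^\star=x$; an identity $u\approx v$ between involutory words holds in $\mathcal{K}_3^\rho$ if both sides agree under every assignment of elements to letters, with $x^\star$ interpreted via ${}^\rho$. *)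

(* Defs.v *)
From mathcomp Require Import all_boot.
Set Implicit Arguments. Unset Strict Implicit. Unset Printing Implicit Defensive.

Inductive kgen : Type := gc | gh1 | gh2.

(* Elements of the free monoid on {c,h1,h2} are [seq kgen]; the empty word is 1. *)

Inductive krel : seq kgen -> seq kgen -> Prop :=
  | kr_h121 : krel [:: gh1; gh2; gh1] [:: gh1]
  | kr_h212 : krel [:: gh2; gh1; gh2] [:: gh2]
  | kr_sq1  : krel [:: gh1; gh1] [:: gc; gh1]
  | kr_sq2  : krel [:: gh2; gh2] [:: gc; gh2]
  | kr_c1   : krel [:: gc; gh1] [:: gh1; gc]
  | kr_c2   : krel [:: gc; gh2] [:: gh2; gc].

(* The congruence on the free monoid generated by the relations:
   two words are equal in K_3 iff they are related by [kcong]. *)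
Inductive kcong : seq kgen -> seq kgen -> Prop :=
  | kc_step : forall u v l r, krel l r -> kcong (u ++ l ++ v) (u ++ r ++ v)
  | kc_refl : forall u, kcong u u
  | kc_sym  : forall u v, kcong u v -> kcong v u
  | kc_trans : forall u v w, kcong u v -> kcong v w -> kcong u w.

Definition kswap (g : kgen) : kgen :=
  match g with gc => gc | gh1 => gh2 | gh2 => gh1 end.
Definition krho (s : seq kgen) : seq kgen := rev (map kswap s).

(* Involutory words over the alphabet X = nat: a letter (x, false) is x,
   a letter (x, true) is x^*. Involutory words are nonempty sequences. *)
Definition iletter := (nat * bool)%type.
Definition iword := seq iletter.

Definition eval_letter (phi : nat -> seq kgen) (a : iletter) : seq kgen :=
  if a.2 then krho (phi a.1) else phi a.1.
Definition eval_iword (phi : nat -> seq kgen) (w : iword) : seq kgen :=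
  flatten (map (eval_letter phi) w).

Definition holds_K3rho (u v : iword) : Prop :=
  forall phi : nat -> seq kgen, kcong (eval_iword phi u) (eval_iword phi v).

(* Zimin words: Z_1 = x_1, Z_{n+1} = Z_n x_{n+1} Z_n  (zimin 0 is unused). *)
Fixpoint zimin (n : nat) : iword :=
  match n with
  | 0 => [::]
  | m.+1 => zimin m ++ (m.+1, false) :: zimin m
  end.

(* Main.v *)
Require Import Defs.
From mathcomp Require Import all_boot zify.
Set Implicit Arguments. Unset Strict Implicit. Unset Printing Implicit Defensive.

Inductive J3 := J1 | Ja | Jb | Jab | Jba.

Definition isB d := match d with Jb | Jba => true | _ => false end.
Definition isA d := match d with Ja | Jba => true | _ => false end.

Definition step (s : nat * J3) (g : kgen) : nat * J3 :=
  let: (k, d) := s in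
  match g, d with
  | gc, _ => (k.+1, d)
  | gh1, J1 => (k, Ja) | gh1, Ja => (k.+1, Ja) | gh1, Jb => (k, Jba)
  | gh1, Jab => (k, Ja) | gh1, Jba => (k.+1, Jba)
  | gh2, J1 => (k, Jb) | gh2, Jb => (k.+1, Jb) | gh2, Ja => (k, Jab)
  | gh2, Jba => (k, Jb) | gh2, Jab => (k.+1, Jab)
  end.

Lemma kcong_inv u v : kcong u v -> forall s, foldl step s u = foldl step s v.
Proof.
elim=> {u v} [u v l r hr|u|u v _ IH|u v w _ IH1 _ IH2] s //.
- rewrite !foldl_cat; congr foldl.
  case: (foldl step s u) => k d.
  by case: hr; case: d.
- by rewrite IH1 IH2.
Qed.

Lemma foldl_mono s u : s.1 <= (foldl step s u).1.
Proof.
elim: u s => //= g u IH [k d]; apply: leq_trans (IH _).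
by case: g; case: d => /=.
Qed.

Lemma foldl_ub s u : (foldl step s u).1 <= s.1 + size u.
Proof.
elim: u s => [|g u IH] [k d] /=; first by rewrite addn0.
apply: leq_trans (IH _) _.
by case: g; case: d => /=; lia.
Qed.

Lemma foldl_stay s u : isB s.2 -> isB (foldl step s u).2.
Proof.
elim: u s => //= g u IH [k d] /= hd; apply: IH.
by move: hd; case: g; case: d.
Qed.

Lemma foldl_nseq_c k d m : foldl step (k, d) (nseq m gc) = (k + m, d).
Proof. by elim: m k => [|m IH] k /=; rewrite ?addn0 // IH addnS. Qed.

Lemma foldl_nseq_h1 k m : foldl step (k, Ja) (nseq m gh1) = (k + m, Ja).
Proof. by elim: m k => [|m IH] k /=; rewrite ?addn0 // IH addnS. Qed.
Definition clsf (a x : iletter) := if x == a then gh1 else gh2.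
Fixpoint Fa (a : iletter) (v : iword) : iword :=
  match v with [::] => [::] | b :: v' => b :: a :: Fa a v' end.
Definition ins a v := a :: Fa a v.

Lemma Lw a : forall n w k d e, size w <= n -> isA d ->
  foldl step (k, d) (map (clsf a) w) = (k, e) -> isA e ->
  w = Fa a (filter (fun x => x != a) w).
Proof.
elim=> [|n IH] [|x w] k d e //= hs hd.
case: (x =P a) => [->|nxa].
  rewrite {1}/clsf eqxx.
  move=> hf _; have := foldl_mono (step (k, d) gh1) (map (clsf a) w).
  by rewrite hf /=; case: d hd hf => //= _ _; lia.
have -> : clsf a x = gh2 by rewrite /clsf; case: eqP.
case: w hs => [|y w] hs.
  by case: d hd => //= _ [<-].
rewrite /=; case: (y =P a) => [->|nya].
  rewrite {1}/clsf eqxx.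
  move=> hf he.
  have hw : w = Fa a (filter (fun x => x != a) w).
    case: d hd hf => //= _ hf.
    - by apply: (IH w k Ja e) => //=; move: hs => /=; lia.
    - by apply: (IH w k Jba e) => //=; move: hs => /=; lia.
  by rewrite /= -hw.
have -> : clsf a y = gh2 by rewrite /clsf; case: eqP.
move=> hf _; have := foldl_mono (step (step (k, d) gh2) gh2) (map (clsf a) w).
by rewrite hf /=; case: d hd hf => //= _ _; lia.
Qed.

Lemma alt_shape a w k : foldl step (k, J1) (map (clsf a) w) = (k, Ja) ->
  w = ins a (filter (fun x => x != a) w).
Proof.
case: w => [|x w] //=; case: (x =P a) => [->|nxa].
  have -> : clsf a a = gh1 by rewrite /clsf eqxx.
  move=> /= hf.
  by rewrite /ins /= -(Lw (n:=size w) (d:=Ja) (e:=Ja) (leqnn _) erefl hf).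
have -> : clsf a x = gh2 by rewrite /clsf; case: eqP.
move=> /= hf; have := foldl_stay (map (clsf a) w) (s:=(k,Jb)) erefl.
by rewrite hf.
Qed.

Definition hb (b : bool) := if b then gh2 else gh1.

Lemma allh1 : forall bs k d, isA d ->
  (foldl step (k, d) (map hb bs)).1 = k + size bs -> all negb bs.
Proof.
elim=> [|b bs IH] k d hd //=.
case: b => /=.
  have := foldl_ub (step (k, d) gh2) (map hb bs); rewrite size_map.
  by case: d hd => //= _; lia.
case: d hd => //= _ hf.
- by apply: (IH k.+1 Ja) => //; rewrite hf; lia.
- by apply: (IH k.+1 Jba) => //; rewrite hf; lia.
Qed.

Lemma start_h1 bs m : foldl step (0, J1) (map hb bs) = (m, Ja) ->
  size bs = m.+1 -> all negb bs.
Proof.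
case: bs => [|b bs] //=; case: b => /= hf.
  by have := foldl_stay (map hb bs) (s:=(0,Jb)) erefl; rewrite hf.
move=> [hs]; apply: (allh1 (k:=0) (d:=Ja)) => //.
by rewrite hf hs.
Qed.
Fixpoint Z (o n : nat) : iword :=
  match n with 0 => [::] | m.+1 => Z o m ++ (o + m.+1, false) :: Z o m end.

Lemma zimin_Z n : zimin n = Z 0 n.
Proof. by elim: n => //= n ->; rewrite add0n. Qed.

Lemma Fa_cat a v b v' : Fa a (v ++ b :: v') = Fa a v ++ b :: a :: Fa a v'.
Proof. by elim: v => //= x v ->. Qed.

Lemma Z_ins o n : Z o n.+1 = ins (o.+1, false) (Z o.+1 n).
Proof.
elim: n => [|n IH]; first by rewrite /= addn1.
rewrite -[Z o n.+2]/(Z o n.+1 ++ (o + n.+2, false) :: Z o n.+1) IH.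
rewrite -[Z o.+1 n.+1]/(Z o.+1 n ++ (o.+1 + n.+1, false) :: Z o.+1 n).
by rewrite /ins /= Fa_cat /= addSnnS.
Qed.

Lemma Z_letters o n x : x \in Z o n -> x.2 = false /\ o < x.1.
Proof.
elim: n => //= n IH; rewrite mem_cat in_cons => /orP [|/orP [/eqP ->|]] //=;
  try exact: IH.
split=> //; lia.
Qed.

Lemma eval_cons phi x u : eval_iword phi (x :: u) = eval_letter phi x ++ eval_iword phi u.
Proof. by []. Qed.

Lemma E_all_c w : eval_iword (fun _ => [:: gc]) w = nseq (size w) gc.
Proof. by elim: w => //= x w IH; rewrite eval_cons IH /eval_letter; case: x.2. Qed.

Lemma E_cnt o w : eval_iword (fun y => if y == o then [:: gc] else [::]) w =
  nseq (count (fun x => x.1 == o) w) gc.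
Proof.
elim: w => //= x w IH; rewrite eval_cons IH /eval_letter.
by case: x => x1 b /=; case: (x1 == o); case: b.
Qed.

Lemma E_h1 o w : eval_iword (fun y => if y == o then [:: gh1] else [::]) w =
  map hb (map snd (filter (fun x => x.1 == o) w)).
Proof.
elim: w => //= x w IH; rewrite eval_cons IH /eval_letter.
by case: x => x1 b /=; case: (x1 == o); case: b.
Qed.

Lemma E_del o phi w : eval_iword (fun y => if y == o then [::] else phi y) w =
  eval_iword phi (filter (fun x => x.1 != o) w).
Proof.
elim: w => //= x w IH; rewrite eval_cons IH /eval_letter.
by case: x => x1 b /=; case: (x1 == o); case: b.
Qed.

Lemma E3 o u : (forall x, x \in u -> x.2 = false) ->
  eval_iword (fun y => if y == o then [:: gh1] else [:: gh2]) u =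
  map (clsf (o, false)) u.
Proof.
elim: u => //= x u IH hu; rewrite eval_cons IH; last first.
  by move=> y hy; apply: hu; rewrite in_cons hy orbT.
case: x hu => x1 b hu.
have -> : b = false by apply: (hu (x1, b)); rewrite in_cons eqxx.
rewrite /eval_letter /clsf /= xpair_eqE andbT.
by case: (x1 == o).
Qed.

Lemma snd_unstar (P : pred iletter) (u : iword) : (forall x, x \in u -> x.2 = false) ->
  map snd (filter P u) = nseq (count P u) false.
Proof.
elim: u => //= x u IH hu.
have hu' : forall y, y \in u -> y.2 = false.
  by move=> y hy; apply: hu; rewrite in_cons hy orbT.
case: (P x) => /=; rewrite IH //.
by rewrite (hu x) ?in_cons ?eqxx.
Qed.

Lemma filter_Fa P a v : ~~ P a -> filter P (Fa a v) = filter P v.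
Proof. by move=> hPa; elim: v => //= x v ->; rewrite (negbTE hPa). Qed.

Lemma FaVal a v k : (forall x, x \in v -> x != a) ->
  foldl step (k, Ja) (map (clsf a) (Fa a v)) = (k, Ja).
Proof.
elim: v => //= x v IH hv.
rewrite {1}/clsf (negbTE (hv x _)) ?in_cons ?eqxx // {1}/clsf eqxx /=.
by apply: IH => y hy; apply: hv; rewrite in_cons hy orbT.
Qed.

Lemma main_gen n : forall o w, holds_K3rho (Z o n) w -> w = Z o n.
Proof.
elim: n => [|n IH] o w H.
  have := kcong_inv (H (fun _ => [:: gc])) (0, J1).
  rewrite !E_all_c !foldl_nseq_c => -[].
  by case: w {H} => //= ? ?; lia.
have HZ : forall x, x \in Z o n.+1 -> x.2 = false.
  by move=> x /Z_letters [].
set a := (o.+1, false); set v := Z o.+1 n.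
have Hv : forall x, x \in v -> x.2 = false /\ o.+1 < x.1 by move=> x /Z_letters.
have Hva : all (fun x => x.1 != o.+1) v.
  by apply/allP => x /Hv [_ h]; rewrite neq_ltn h orbT.
have Hw'' : filter (fun x => x.1 != o.+1) w = v.
  apply: IH => phi.
  have := H (fun y => if y == o.+1 then [::] else phi y).
  rewrite !E_del Z_ins /ins /= eqxx /= filter_Fa ?eqxx //.
  by rewrite (all_filterP Hva).
have Hcnt : count (fun x => x.1 == o.+1) w = count (fun x => x.1 == o.+1) (Z o n.+1).
  have := kcong_inv (H (fun y => if y == o.+1 then [:: gc] else [::])) (0, J1).
  by rewrite !E_cnt !foldl_nseq_c /= => -[].
have [m Hm] : exists m, count (fun x => x.1 == o.+1) (Z o n.+1) = m.+1.
  by rewrite Z_ins /ins /= eqxx; eexists.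
have Hstar : forall x, x \in w -> x.1 = o.+1 -> x.2 = false.
  have := kcong_inv (H (fun y => if y == o.+1 then [:: gh1] else [::])) (0, J1).
  rewrite !E_h1 (snd_unstar _ HZ) Hm map_nseq /= foldl_nseq_h1 add0n => hf.
  have := start_h1 (esym hf); rewrite !size_map size_filter Hcnt Hm => /(_ erefl).
  move=> /allP hall x hx hx1.
  apply/negbTE/hall/mapP; exists x => //.
  by rewrite mem_filter hx1 eqxx hx.
have Hunst : forall x, x \in w -> x.2 = false.
  move=> x hx; case: (x.1 =P o.+1) => [/(Hstar x hx)//|ne].
  have : x \in v by rewrite -Hw'' mem_filter hx andbT; apply/eqP.
  by move/Hv => [].
have := kcong_inv (H (fun y => if y == o.+1 then [:: gh1] else [:: gh2])) (0, J1).
rewrite (E3 _ HZ) (E3 _ Hunst) Z_ins /ins /= {1}/clsf eqxx /= FaVal; last first.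
  by move=> x /Hv [_ h]; apply/eqP => hx; rewrite hx /= ltnn in h.
move/esym/alt_shape => ->.
rewrite /ins; congr (_ :: Fa _ _); rewrite -[Z o.+1 n]Hw''.
apply: eq_in_filter => x hx.
case: x hx => x1 b hx; have := Hunst _ hx => /= ->.
by rewrite /a xpair_eqE andbT.
Qed.

Theorem mainTheorem9 :
  forall (n : nat), 1 <= n ->
  forall (w : iword), w <> [::] ->
  holds_K3rho (zimin n) w -> w = zimin n.
Proof.
by move=> n _ w _; rewrite zimin_Z; apply: main_gen.
Qed.
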